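(* Let $\pi_k$ be a current policy, let $\pi$ be any policy, and let $\pi_{\mathrm{ref}}$ be a reference policy. Then $$J(\pi)-J(\pi_k)\;\ge\;\frac{1}{1-\gamma}\,\mathbb E_{(s,a)\sim d^{\pi_{\mathrm{ref}}}}\!\left[\frac{\pi(a\mid s)}{\pi_{\mathrm{ref}}(a\mid s)}A^{\pi_k}(s,a)\right]\;-\;\frac{2\gamma C^{\pi,\pi_k}}{(1-\gamma)^2}\,\mathbb E_{s\sim d^{\pi_{\mathrm{ref}}}}\big[\mathrm{TV}(\pi,\pi_{\mathrm{ref}})(s)\big],$$ where $C^{\pi,\pi_k}=\max_{s\in\mathcal S}\big|\mathbb E_{a\sim\pi(\cdot\mid s)}[A^{\pi_k}(s,a)]\big|$.
   Context: We work with an infinite-horizon discounted Markov decision process $(\mathcal S,\mathcal A,p,r,\rho_0,\gamma)$ with state space $\mathcal S$, action space $\mathcal A$, transition kernel $p(\cdot\mid s,a)$, reward $r:\mathcal S\times\mathcal A\to\mathbb R$, initial state distribution $\rho_0$, and discount $\gamma\in[0,1)$. A (stationary) policy $\pi$ maps each state $s$ to a distribution $\pi(\cdot\mid s)$ over actions. The objective is $J(\pi)=\mathbb E_{\tau\sim\pi}[\sum_{t=0}^\infty\gamma^t r(s_t,a_t)]$, where trajectories are generated by $s_0\sim\rho_0$, $a_t\sim\pi(\cdot\mid s_t)$, $s_{t+1}\sim p(\cdot\mid s_t,a_t)$. The normalized discounted state visitation distribution is $d^{\pi}(s)=(1-\gamma)\sum_{t=0}^\infty\gamma^t\,\mathbb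 P(s_t=s\mid\rho_0,\pi,p)$, and $d^{\pi}(s,a)=d^{\pi}(s)\pi(a\mid s)$ is the corresponding state-action distribution. $V^{\pi}(s)$ and $Q^{\pi}(s,a)$ are the usual discounted state and state-action value functions of $\pi$, and $A^{\pi}(s,a)=Q^{\pi}(s,a)-V^{\pi}(s)$ is the advantage function. $\mathrm{TV}(\pi,\pi')(s)$ is the total variation distance between $\pi(\cdot\mid s)$ and $\pi'(\cdot\mid s)$. *)

(* Defs.v *)
From HB Require Import structures.
From mathcomp Require Import all_boot all_order all_algebra.
From mathcomp Require Import all_classical all_reals all_analysis.
Set Implicit Arguments. Unset Strict Implicit. Unset Printing Implicit Defensive.
Import Order.TTheory GRing.Theory Num.Theory.
Import numFieldNormedType.Exports.
Local Open Scope ring_scope.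
Local Open Scope classical_set_scope.

Section MDP.
Variables (R : realType) (S A : finType).

Definition is_dist (T : finType) (mu : T -> R) :=
  (forall x, 0 <= mu x) /\ \sum_(x : T) mu x = 1.

(* pi : S -> A -> R, pi s a = pi(a | s) *)
Definition is_policy (pi : S -> A -> R) := forall s, is_dist (pi s).
(* p : S -> A -> S -> R, p s a s' = p(s' | s, a) *)
Definition is_kernel (p : S -> A -> S -> R) := forall s a, is_dist (p s a).

Definition rseries (u : nat -> R) : R := limn (series u).

Variables (p : S -> A -> S -> R) (r : S -> A -> R) (gamma : R).

Fixpoint stdist (pi : S -> A -> R) (mu : S -> R) (t : nat) : S -> R :=
  match t with
  | 0 => mu
  | t'.+1 => fun s' => \sum_(s : S) \sum_(a : A)
                 stdist pi mu t' s * pi s a * p s a s'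
  end.

Definition exp_reward (pi : S -> A -> R) (mu : S -> R) (t : nat) : R :=
  \sum_(s : S) \sum_(a : A) stdist pi mu t s * pi s a * r s a.

Definition Jret (rho0 : S -> R) (pi : S -> A -> R) : R :=
  rseries (fun t => gamma ^+ t * exp_reward pi rho0 t).

Definition dirac_s (s : S) : S -> R := fun s' => if s' == s then 1 else 0.

Definition Vf (pi : S -> A -> R) (s : S) : R :=
  rseries (fun t => gamma ^+ t * exp_reward pi (dirac_s s) t).

(* Q(s,a): a_0 = a fixed, s_1 ~ p(.|s,a), then follow pi *)
Definition Qf (pi : S -> A -> R) (s : S) (a : A) : R :=
  rseries (fun t => gamma ^+ t *
     (match t with 0 => r s a | t'.+1 => exp_reward pi (p s a) t' end)).

Definition Af (pi : S -> A -> R) (s : S) (a : A) : R := Qf pi s a - Vf pi s.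

Definition dvis (rho0 : S -> R) (pi : S -> A -> R) (s : S) : R :=
  (1 - gamma) * rseries (fun t => gamma ^+ t * stdist pi rho0 t s).

Definition TV (pi pi' : S -> A -> R) (s : S) : R :=
  2^-1 * \sum_(a : A) `| pi s a - pi' s a |.

End MDP.

(* Main.v *)
Require Import Defs.
From HB Require Import structures.
From mathcomp Require Import all_boot all_order all_algebra.
From mathcomp Require Import all_classical all_reals all_analysis.
From mathcomp Require Import ring lra.
Import Order.TTheory GRing.Theory Num.Theory.
Import numFieldNormedType.Exports.
Local Open Scope ring_scope.
Local Open Scope classical_set_scope.

Module Aux.
Set Implicit Arguments. Unset Strict Implicit.
Section Ser.
Variables (R : realType) (gamma : R).
Hypotheses (g0 : 0 <= gamma) (g1 : gamma < 1).

Definition geob (x : nat -> R) := fun t => gamma ^+ t * x t.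

Lemma cvg_geob (x : nat -> R) M : (forall t, `|x t| <= M) -> cvgn (series (geob x)).
Proof.
move=> hM.
have M0 : 0 <= M by apply: le_trans (hM 0%N).
apply: normed_cvg.
apply: (@series_le_cvg _ _ (geometric M gamma)).
- by move=> n; exact: normr_ge0.
- by move=> n; rewrite /geometric /=; apply: mulr_ge0 => //; apply: exprn_ge0.
- move=> n /=; rewrite /geob normrM ger0_norm ?exprn_ge0// mulrC.
  by apply: ler_wpM2r => //; apply: exprn_ge0.
- by apply: is_cvg_geometric_series; rewrite ger0_norm.
Qed.

Lemma cvg_sumseq (I : eqType) (s : seq I) (u : I -> nat -> R) (l : I -> R) :
  (forall i, u i @ \oo --> l i) ->
  (fun n => \sum_(i <- s) u i n) @ \oo --> \sum_(i <- s) l i.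
Proof.
move=> h; elim: s => [|i s IH].
  rewrite big_nil; under eq_fun do rewrite big_nil; exact: cvg_cst.
rewrite big_cons; under eq_fun do rewrite big_cons.
exact: cvgD.
Qed.

Lemma rseries_sum (I : finType) (c : I -> R) (f : I -> nat -> R) :
  (forall i, cvgn (series (f i))) ->
  rseries (fun t => \sum_i c i * f i t) = \sum_i c i * rseries (f i).
Proof.
move=> h; rewrite /rseries.
have -> : series (fun t => \sum_i c i * f i t) = (fun n => \sum_i c i * series (f i) n).
  apply/funext => n; rewrite /series /= exchange_big /=.
  by apply: eq_bigr => i _; rewrite mulr_sumr.
apply: cvg_lim => //.
apply: cvg_sumseq => i; apply: cvgMl_tmp; exact: h.
Qed.

Lemma cvg_rseries_sum (I : finType) (c : I -> R) (f : I -> nat -> R) :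
  (forall i, cvgn (series (f i))) ->
  cvgn (series (fun t => \sum_i c i * f i t)).
Proof.
move=> h.
have -> : series (fun t => \sum_i c i * f i t) = (fun n => \sum_i c i * series (f i) n).
  apply/funext => n; rewrite /series /= exchange_big /=.
  by apply: eq_bigr => i _; rewrite mulr_sumr.
apply/cvg_ex; eexists; apply: cvg_sumseq => i; apply: cvgMl_tmp; exact: h.
Qed.

Lemma rseries_shift (u : nat -> R) :
  cvgn (series (fun t => u t.+1)) ->
  rseries u = u 0%N + rseries (fun t => u t.+1).
Proof.
move=> h; rewrite /rseries; apply: cvg_lim => //.
rewrite -cvg_shiftS /=.
have -> : (fun n => series u n.+1) = (fun n => u 0%N + series (fun t => u t.+1) n).
  apply/funext => n; rewrite /series /= big_nat_recl //.
apply: cvgD; first exact: cvg_cst.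
exact: h.
Qed.

Lemma rseries_ge0 (u : nat -> R) : cvgn (series u) -> (forall t, 0 <= u t) -> 0 <= rseries u.
Proof.
move=> h u0; rewrite /rseries; apply: limr_ge => //.
by near=> n; apply: sumr_ge0.
Unshelve. all: by end_near.
Qed.


Lemma series_scale c (u : nat -> R) : series (fun t => c * u t) = (fun n => c * series u n).
Proof. by apply/funext => n; rewrite /series /= mulr_sumr. Qed.

Lemma rseries_scale c (u : nat -> R) : cvgn (series u) -> rseries (fun t => c * u t) = c * rseries u.
Proof. by move=> h; rewrite /rseries series_scale; apply: cvg_lim => //; apply: cvgMl_tmp. Qed.

Lemma cvg_scale c (u : nat -> R) : cvgn (series u) -> cvgn (series (fun t => c * u t)).
Proof. by move=> h; rewrite series_scale; apply/cvg_ex; eexists; apply: cvgMl_tmp; exact: h. Qed.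

Lemma rseries_geoS (y : nat -> R) M : (forall t, `|y t| <= M) ->
  rseries (geob y) = y 0%N + gamma * rseries (geob (fun t => y t.+1)).
Proof.
move=> h.
have e : (fun t => geob y t.+1) = (fun t => gamma * geob (fun t => y t.+1) t).
  by apply/funext => t; rewrite /geob exprS mulrA.
have c1 : cvgn (series (geob (fun t => y t.+1))) by exact: (@cvg_geob (fun t => y t.+1) M (fun t => h t.+1)).
rewrite rseries_shift; last by rewrite e; apply: cvg_scale.
by rewrite e rseries_scale // /geob expr0 mul1r.
Qed.

End Ser.

Section MDP.
Variables (R : realType) (S A : finType) (p : S -> A -> S -> R) (r : S -> A -> R).
Hypothesis Hp : is_kernel p.

Definition step (pi : S -> A -> R) (mu : S -> R) : S -> R :=
  fun s' => \sum_(s : S) \sum_(a : A) mu s * pi s a * p s a s'.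

Lemma stdistS pi mu t : stdist p pi mu t.+1 = step pi (stdist p pi mu t).
Proof. by []. Qed.

Lemma stdist_shift pi mu t : stdist p pi mu t.+1 = stdist p pi (step pi mu) t.
Proof.
elim: t => [//|t IH]; by rewrite stdistS IH -stdistS.
Qed.

Lemma sum_dirac (f : S -> R) s : \sum_s0 f s0 * dirac_s R s0 s = f s.
Proof.
rewrite (bigD1 s) //= /dirac_s eqxx mulr1 big1 ?addr0 // => i hi.
by rewrite eq_sym (negbTE hi) mulr0.
Qed.

Lemma sum_dirac' (f : S -> R) s : \sum_s0 dirac_s R s s0 * f s0 = f s.
Proof.
rewrite (bigD1 s) //= /dirac_s eqxx mul1r big1 ?addr0 // => i hi.
by rewrite (negbTE hi) mul0r.
Qed.

Lemma stdist_lin pi mu t s' :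
  stdist p pi mu t s' = \sum_s0 mu s0 * stdist p pi (dirac_s R s0) t s'.
Proof.
elim: t s' => [|t IH] s' /=.
  by rewrite sum_dirac.
under eq_bigr => s _ do under eq_bigr => a _ do rewrite IH !mulr_suml.
rewrite (eq_bigr (fun s => \sum_s0 \sum_a mu s0 * stdist p pi (dirac_s R s0) t s * pi s a * p s a s')); last first.
  by move=> s _; rewrite exchange_big.
rewrite exchange_big /=; apply: eq_bigr => s0 _.
rewrite mulr_sumr; apply: eq_bigr => s _; rewrite mulr_sumr; apply: eq_bigr => a _.
by rewrite !mulrA.
Qed.

Lemma le_sum1 (I : finType) (f : I -> R) i : (forall j, 0 <= f j) -> f i <= \sum_j f j.
Proof.
move=> h; rewrite (bigD1 i) //= lerDl; apply: sumr_ge0 => j _; exact: h.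
Qed.

Arguments le_sum1 {I} f i.

Lemma stdist_dist pi mu t : is_policy pi -> is_dist mu -> is_dist (stdist p pi mu t).
Proof.
move=> Hpi [m0 m1]; elim: t => [|t [IH0 IH1]] //=; split.
  move=> s'; apply: sumr_ge0 => s _; apply: sumr_ge0 => a _.
  apply: mulr_ge0; [apply: mulr_ge0|]; [exact: IH0|exact: (Hpi s).1|exact: (Hp s a).1].
rewrite exchange_big /= -IH1; apply: eq_bigr => s _.
rewrite exchange_big /= -[RHS]mulr1 -(Hpi s).2 mulr_sumr; apply: eq_bigr => a _.
by rewrite -mulr_sumr (Hp s a).2 mulr1.
Qed.

Lemma dist_le1 (T : finType) (mu : T -> R) x : is_dist mu -> 0 <= mu x <= 1.
Proof. move=> [h0 h1]; rewrite h0 /= -h1; exact: (le_sum1 mu x). Qed.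

Arguments dist_le1 {T mu} x.

Definition Mr := \sum_s \sum_a `|r s a|.

Lemma r_le s a : `|r s a| <= Mr.
Proof.
rewrite /Mr (le_trans _ (le_sum1 (fun s => \sum_a `|r s a|) s _)) //.
- exact: (le_sum1 (fun a => `|r s a|)).
- by move=> j; apply: sumr_ge0.
Qed.

Lemma ER_bound pi mu t : is_policy pi -> is_dist mu -> `|exp_reward p r pi mu t| <= Mr.
Proof.
move=> Hpi Hmu; rewrite /exp_reward /Mr.
apply: le_trans (ler_norm_sum _ _ _) _; apply: ler_sum => s _.
apply: le_trans (ler_norm_sum _ _ _) _; apply: ler_sum => a _.
have /andP[h0 h1] := dist_le1 s (stdist_dist t Hpi Hmu).
have /andP[k0 k1] := dist_le1 a (Hpi s).
rewrite !normrM (ger0_norm h0) (ger0_norm k0) -[X in _ <= X]mul1r.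
apply: ler_pM => //; first by apply: mulr_ge0.
by rewrite -[1]mulr1; apply: ler_pM.
Qed.


Lemma dirac_dist (s : S) : is_dist (dirac_s R s).
Proof.
split; first by move=> x; rewrite /dirac_s; case: (x == s).
by rewrite -(sum_dirac' (fun _ => 1) s); apply: eq_bigr => i _; rewrite mulr1.
Qed.

Lemma ER_lin pi mu t :
  exp_reward p r pi mu t = \sum_s0 mu s0 * exp_reward p r pi (dirac_s R s0) t.
Proof.
rewrite /exp_reward.
under eq_bigr => s _ do under eq_bigr => a _ do rewrite stdist_lin !mulr_suml.
rewrite (eq_bigr (fun s => \sum_s0 \sum_a mu s0 * stdist p pi (dirac_s R s0) t s * pi s a * r s a)); last first.
  by move=> s _; rewrite exchange_big.
rewrite exchange_big /=; apply: eq_bigr => s0 _.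
rewrite mulr_sumr; apply: eq_bigr => s _; rewrite mulr_sumr; apply: eq_bigr => a _.
by rewrite !mulrA.
Qed.

Lemma ER_dirac0 pi s : exp_reward p r pi (dirac_s R s) 0 = \sum_a pi s a * r s a.
Proof.
rewrite /exp_reward /= -(sum_dirac' (fun s0 => \sum_a pi s0 a * r s0 a) s).
by apply: eq_bigr => s0 _; rewrite mulr_sumr; apply: eq_bigr => a _; rewrite mulrA.
Qed.

Lemma ER_diracS pi s t :
  exp_reward p r pi (dirac_s R s) t.+1 = \sum_a pi s a * exp_reward p r pi (p s a) t.
Proof.
have -> : exp_reward p r pi (dirac_s R s) t.+1 = exp_reward p r pi (step pi (dirac_s R s)) t.
  by rewrite /exp_reward stdist_shift.
rewrite ER_lin.
under [RHS]eq_bigr => a _ do rewrite ER_lin mulr_sumr.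
rewrite exchange_big /=; apply: eq_bigr => s0 _.
have -> : step pi (dirac_s R s) s0 = \sum_a pi s a * p s a s0.
  rewrite /step -(sum_dirac' (fun s1 => \sum_a pi s1 a * p s1 a s0) s).
  by apply: eq_bigr => s1 _; rewrite mulr_sumr; apply: eq_bigr => a _; rewrite mulrA.
by rewrite mulr_suml; apply: eq_bigr => a _; rewrite !mulrA.
Qed.

End MDP.

Section Val.
Variables (R : realType) (S A : finType) (p : S -> A -> S -> R) (r : S -> A -> R).
Hypothesis Hp : is_kernel p.
Variables (gamma : R).
Hypotheses (g0 : 0 <= gamma) (g1 : gamma < 1).

Lemma cvg_ER pi mu : is_policy pi -> is_dist mu ->
  cvgn (series (geob gamma (exp_reward p r pi mu))).
Proof. by move=> Hpi Hmu; apply: (cvg_geob g0 g1 (M := Mr r)) => t; apply: ER_bound. Qed.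

Lemma rseries_ER_lin pi mu : is_policy pi ->
  rseries (geob gamma (exp_reward p r pi mu)) = \sum_s0 mu s0 * Vf p r gamma pi s0.
Proof.
move=> Hpi.
have -> : geob gamma (exp_reward p r pi mu) =
   (fun t => \sum_s0 mu s0 * geob gamma (exp_reward p r pi (dirac_s R s0)) t).
  apply/funext => t; rewrite /geob ER_lin mulr_sumr; apply: eq_bigr => s0 _.
  by rewrite mulrCA.
rewrite rseries_sum //= => s0; apply: cvg_ER => //; exact: dirac_dist.
Qed.

Lemma Q_eq pi s a : is_policy pi ->
  Qf p r gamma pi s a = r s a + gamma * rseries (geob gamma (exp_reward p r pi (p s a))).
Proof.
move=> Hpi.
change (Qf p r gamma pi s a) with (rseries (geob gamma
   (fun t => match t with 0%N => r s a | t'.+1 => exp_reward p r pi (p s a) t' end))).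
rewrite (rseries_geoS g0 g1 (M := Mr r)) //.
case=> [|t]; first exact: r_le.
by apply: ER_bound.
Qed.

Lemma V_eq pi s : is_policy pi ->
  Vf p r gamma pi s = \sum_a pi s a * Qf p r gamma pi s a.
Proof.
move=> Hpi.
change (Vf p r gamma pi s) with (rseries (geob gamma (exp_reward p r pi (dirac_s R s)))).
rewrite (rseries_geoS g0 g1 (M := Mr r)); last first.
  by move=> t; apply: ER_bound => //; exact: dirac_dist.
under eq_bigr => a _ do rewrite Q_eq //.
have -> : geob gamma (fun t => exp_reward p r pi (dirac_s R s) t.+1) =
   (fun t => \sum_a pi s a * geob gamma (exp_reward p r pi (p s a)) t).
  apply/funext => t; rewrite /geob ER_diracS mulr_sumr; apply: eq_bigr => a _.
  by rewrite mulrCA.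
rewrite rseries_sum; last by move=> a; apply: cvg_ER.
rewrite ER_dirac0 mulr_sumr -big_split /=; apply: eq_bigr => a _.
by rewrite mulrDr mulrCA.
Qed.


Lemma cvg_D pi rho s : is_policy pi -> is_dist rho ->
  cvgn (series (geob gamma (fun t => stdist p pi rho t s))).
Proof.
move=> Hpi Hrho; apply: (cvg_geob g0 g1 (M := 1)) => t.
have /andP[h0 h1] := dist_le1 s (stdist_dist Hp t Hpi Hrho).
by rewrite ger0_norm.
Qed.

Lemma J_D pi rho : is_policy pi -> is_dist rho ->
  Jret p r gamma rho pi = \sum_s (\sum_a pi s a * r s a) * rseries (geob gamma (fun t => stdist p pi rho t s)).
Proof.
move=> Hpi Hrho.
change (Jret p r gamma rho pi) with (rseries (geob gamma (exp_reward p r pi rho))).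
have -> : geob gamma (exp_reward p r pi rho) =
  (fun t => \sum_s (\sum_a pi s a * r s a) * geob gamma (fun t => stdist p pi rho t s) t).
  apply/funext => t; rewrite /geob /exp_reward mulr_sumr; apply: eq_bigr => s _.
  rewrite mulr_sumr mulr_suml; apply: eq_bigr => a _.
  ring.
by rewrite rseries_sum // => s; apply: cvg_D.
Qed.

Lemma D_eq pi rho s' : is_policy pi -> is_dist rho ->
  rseries (geob gamma (fun t => stdist p pi rho t s')) =
  rho s' + gamma * \sum_s (\sum_a pi s a * p s a s') * rseries (geob gamma (fun t => stdist p pi rho t s)).
Proof.
move=> Hpi Hrho.
rewrite (rseries_geoS g0 g1 (M := 1)); last first.
  move=> t; have /andP[h0 h1] := dist_le1 s' (stdist_dist Hp t Hpi Hrho).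
  by rewrite ger0_norm.
congr (_ + _ * _).
have -> : geob gamma (fun t => stdist p pi rho t.+1 s') =
  (fun t => \sum_s (\sum_a pi s a * p s a s') * geob gamma (fun t => stdist p pi rho t s) t).
  apply/funext => t; rewrite /geob /= mulr_sumr; apply: eq_bigr => s _.
  rewrite mulr_sumr mulr_suml; apply: eq_bigr => a _.
  ring.
by rewrite rseries_sum // => s; apply: cvg_D.
Qed.

Lemma D_ge0 pi rho s : is_policy pi -> is_dist rho ->
  0 <= rseries (geob gamma (fun t => stdist p pi rho t s)).
Proof.
move=> Hpi Hrho; apply: rseries_ge0; first exact: cvg_D.
move=> t; apply: mulr_ge0; first exact: exprn_ge0.
exact: (stdist_dist Hp t Hpi Hrho).1.
Qed.


Lemma dvis_eq pi rho s' : is_policy pi -> is_dist rho ->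
  dvis p gamma rho pi s' = (1 - gamma) * rho s' +
     gamma * \sum_s (\sum_a pi s a * p s a s') * dvis p gamma rho pi s.
Proof.
move=> Hpi Hrho; have := D_eq s' Hpi Hrho; rewrite /dvis /geob => ->.
rewrite mulrDr; congr (_ + _).
rewrite mulrCA; congr (_ * _); rewrite mulr_sumr; apply: eq_bigr => s _; ring.
Qed.

Lemma dvis_ge0 pi rho s : is_policy pi -> is_dist rho -> 0 <= dvis p gamma rho pi s.
Proof.
move=> Hpi Hrho; apply: mulr_ge0; first by rewrite subr_ge0 ltW.
exact: (D_ge0 s Hpi Hrho).
Qed.

Lemma J_dvis pi rho : is_policy pi -> is_dist rho ->
  (1 - gamma) * Jret p r gamma rho pi = \sum_s (\sum_a pi s a * r s a) * dvis p gamma rho pi s.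
Proof.
move=> Hpi Hrho; rewrite J_D // mulr_sumr /dvis /geob; apply: eq_bigr => s _; ring.
Qed.

Lemma A_eq pi s a : is_policy pi ->
  Af p r gamma pi s a = r s a + gamma * \sum_s' p s a s' * Vf p r gamma pi s' - Vf p r gamma pi s.
Proof. by move=> Hpi; rewrite /Af Q_eq // rseries_ER_lin. Qed.

Lemma J_V pi rho : is_policy pi ->
  Jret p r gamma rho pi = \sum_s rho s * Vf p r gamma pi s.
Proof.
move=> Hpi; change (Jret p r gamma rho pi) with (rseries (geob gamma (exp_reward p r pi rho))).
exact: rseries_ER_lin.
Qed.

End Val.

End Aux.
Import Aux.

Lemma lerNnorm_self {R : realType} (x : R) : - `|x| <= x.
Proof. by rewrite lerNl -normrN ler_norm. Qed.

Lemma le_bigmax0 (R : realType) (I : finType) (F : I -> R) i :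
  F i <= \big[Num.max/0]_j F j.
Proof. by rewrite (bigD1 i) //= le_max lexx. Qed.

Lemma bigmax0_ge0 (R : realType) (I : finType) (F : I -> R) :
  0 <= \big[Num.max/0]_j F j.
Proof. by apply: (big_rec (fun x => 0 <= x)) => // i x _ hx; rewrite le_max hx orbT. Qed.

Lemma l1_bound {R : realType} {S A : finType} {p : S -> A -> S -> R} :
  is_kernel p -> forall (f : S -> A -> R) (x : S -> R),
  \sum_s' `|\sum_s \sum_a f s a * p s a s' * x s| <= \sum_s \sum_a `|f s a| * `|x s|.
Proof.
move=> Hp f x.
apply: (@le_trans _ _ (\sum_s' \sum_s \sum_a `|f s a| * p s a s' * `|x s|)).
  apply: ler_sum => s' _; apply: le_trans (ler_norm_sum _ _ _) _.
  apply: ler_sum => s _; apply: le_trans (ler_norm_sum _ _ _) _.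
  apply: ler_sum => a _; rewrite !normrM (ger0_norm ((Hp s a).1 s')) //.
rewrite exchange_big /=; apply: ler_sum => s _.
rewrite exchange_big /=; apply: ler_sum => a _.
rewrite -mulr_suml -mulr_sumr (Hp s a).2 mulr1 //.
Qed.

Section Main.
Variables (R : realType) (S A : finType)
  (p : S -> A -> S -> R) (r : S -> A -> R) (rho0 : S -> R) (gamma : R)
  (pik pi piref : S -> A -> R).
Hypotheses (Hp : is_kernel p) (Hrho : is_dist rho0) (g0 : 0 <= gamma) (g1 : gamma < 1)
  (Hk : is_policy pik) (Hpi : is_policy pi) (Href : is_policy piref)
  (Hz : forall s a, piref s a = 0 -> pi s a = 0).

Local Notation dp := (dvis p gamma rho0 pi).
Local Notation dr := (dvis p gamma rho0 piref).
Local Notation Vk := (Vf p r gamma pik).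
Local Notation k := (1 - gamma).
Local Notation g := (fun s => \sum_a pi s a * Af p r gamma pik s a).

Lemma gE s : g s = \sum_a pi s a * r s a
   + gamma * \sum_s' (\sum_a pi s a * p s a s') * Vk s' - Vk s.
Proof.
rewrite /=; under eq_bigr => a _ do rewrite (A_eq r Hp g0 g1) //.
have hs := (Hpi s).2.
transitivity (\sum_a pi s a * r s a + gamma * \sum_a pi s a * \sum_s' p s a s' * Vk s'
    - (\sum_a pi s a) * Vk s).
  rewrite mulr_sumr mulr_suml -sumrN -!big_split /=; apply: eq_bigr => a _; ring.
rewrite hs mul1r; congr (_ + gamma * _ - _).
rewrite (eq_bigr (fun a => \sum_s' pi s a * (p s a s' * Vk s'))); last by move=> a _; rewrite mulr_sumr.
rewrite exchange_big /=; apply: eq_bigr => s' _; rewrite mulr_suml.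
by apply: eq_bigr => a _; ring.
Qed.

Lemma PDL : \sum_s dp s * g s = k * (Jret p r gamma rho0 pi - Jret p r gamma rho0 pik).
Proof.
have Fdp s' := dvis_eq Hp g0 g1 s' Hpi Hrho.
have key : \sum_s dp s * (gamma * \sum_s' (\sum_a pi s a * p s a s') * Vk s')
      = \sum_s' dp s' * Vk s' - k * \sum_s' rho0 s' * Vk s'.
  rewrite mulr_sumr -sumrB.
  transitivity (\sum_s' (gamma * \sum_s (\sum_a pi s a * p s a s') * dp s) * Vk s').
    under eq_bigr => s _ do rewrite mulrCA mulr_sumr mulr_sumr.
    rewrite exchange_big /=; apply: eq_bigr => s' _.
    rewrite -mulr_sumr -mulrA; congr (_ * _); rewrite mulr_suml; apply: eq_bigr => s _; ring.
  apply: eq_bigr => s' _; rewrite [in RHS]Fdp; ring.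
rewrite mulrBr J_dvis // (J_V r Hp g0 g1 rho0 Hk).
under eq_bigr => s _ do rewrite gE.
transitivity (\sum_s (\sum_a pi s a * r s a) * dp s
   + \sum_s dp s * (gamma * \sum_s' (\sum_a pi s a * p s a s') * Vk s')
   - \sum_s dp s * Vk s).
  by rewrite -big_split /= -sumrB; apply: eq_bigr => s _; ring.
rewrite key; ring.
Qed.


Lemma R2 : \sum_s \sum_a dr s * piref s a * (pi s a / piref s a * Af p r gamma pik s a)
   = \sum_s dr s * g s.
Proof.
apply: eq_bigr => s _; rewrite /= mulr_sumr; apply: eq_bigr => a _.
have [h|h] := eqVneq (piref s a) 0.
  by rewrite h (Hz s a h) !(mulr0, mul0r).
by field.
Qed.

Lemma B4 (C : R) : (forall s, `|g s| <= C) ->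
  \sum_s dr s * g s - C * \sum_s `|dp s - dr s| <= \sum_s dp s * g s.
Proof.
move=> gC; rewrite mulr_sumr -sumrB; apply: ler_sum => s _.
have h1 : `|(dp s - dr s) * g s| <= C * `|dp s - dr s|.
  by rewrite normrM mulrC; apply: ler_wpM2r; [exact: normr_ge0 | exact: gC].
have h2 := lerNnorm_self ((dp s - dr s) * g s).
move: h1 h2; rewrite mulrBl; lra.
Qed.

Lemma E5 : k * \sum_s `|dp s - dr s| <= gamma * \sum_s dr s * \sum_a `|pi s a - piref s a|.
Proof.
have Fdp s' := dvis_eq Hp g0 g1 s' Hpi Hrho.
have Fdr s' := dvis_eq Hp g0 g1 s' Href Hrho.
have ee s' : dp s' - dr s' = gamma * (\sum_s \sum_a pi s a * p s a s' * (dp s - dr s))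
     + gamma * (\sum_s \sum_a (pi s a - piref s a) * p s a s' * dr s).
  have hs : \sum_s (\sum_a pi s a * p s a s') * dp s - \sum_s (\sum_a piref s a * p s a s') * dr s
     = \sum_s \sum_a pi s a * p s a s' * (dp s - dr s)
     + \sum_s \sum_a (pi s a - piref s a) * p s a s' * dr s.
    rewrite -big_split -sumrB /=; apply: eq_bigr => s _.
    rewrite !mulr_suml -big_split -sumrB /=; apply: eq_bigr => a _; ring.
  rewrite -mulrDr -hs (Fdp s') (Fdr s'); ring.
have hW := l1_bound Hp pi (fun s => dp s - dr s).
have hZ := l1_bound Hp (fun s a => pi s a - piref s a) dr.
have eW : \sum_s \sum_a `|pi s a| * `|dp s - dr s| = \sum_s `|dp s - dr s|.
  apply: eq_bigr => s _; rewrite -mulr_suml.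
  rewrite (eq_bigr (fun a => pi s a)); first by rewrite (Hpi s).2 mul1r.
  by move=> a _; rewrite ger0_norm // ((Hpi s).1 a).
have eZ : \sum_s \sum_a `|pi s a - piref s a| * `|dr s| = \sum_s dr s * \sum_a `|pi s a - piref s a|.
  apply: eq_bigr => s _; rewrite -mulr_suml mulrC ger0_norm //.
  exact: (dvis_ge0 Hp g0 g1 s Href Hrho).
rewrite eW in hW; rewrite eZ in hZ.
have hsum : \sum_s' `|dp s' - dr s'| <= gamma * \sum_s' `|\sum_s \sum_a pi s a * p s a s' * (dp s - dr s)|
     + gamma * \sum_s' `|\sum_s \sum_a (pi s a - piref s a) * p s a s' * dr s|.
  rewrite !mulr_sumr -big_split /=; apply: ler_sum => s' _.
  rewrite ee; apply: le_trans (ler_normD _ _) _.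
  by rewrite !normrM (ger0_norm g0).
have hW' := ler_wpM2l g0 hW.
have hZ' := ler_wpM2l g0 hZ.
lra.
Qed.


Lemma main (C : R) : (forall s, `|g s| <= C) -> 0 <= C ->
  Jret p r gamma rho0 pi - Jret p r gamma rho0 pik >=
    (1 - gamma)^-1 *
      (\sum_(s : S) \sum_(a : A) dvis p gamma rho0 piref s * piref s a *
          (pi s a / piref s a * Af p r gamma pik s a))
    - (2 * gamma * C) / (1 - gamma) ^+ 2 *
      (\sum_(s : S) dvis p gamma rho0 piref s * TV pi piref s).
Proof.
move=> gC C0.
have k0 : 0 < k by rewrite subr_gt0.
have kn0 : k != 0 by rewrite gt_eqF.
rewrite R2.
have -> : \sum_s dr s * TV pi piref s = 2^-1 * \sum_s dr s * \sum_a `|pi s a - piref s a|.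
  by rewrite mulr_sumr; apply: eq_bigr => s _; rewrite /TV; ring.
have hP := PDL. have hB := B4 C gC. have hE := E5.
have h7 := ler_wpM2r (ltW k0) hB. have h6 := ler_wpM2l C0 hE.
move: hP h7 h6.
set X := \sum_s dr s * g s.
set P := \sum_s dp s * g s.
set E := \sum_s `|dp s - dr s|.
set T := \sum_s dr s * \sum_a `|pi s a - piref s a|.
set J1 := Jret p r gamma rho0 pi.
set J2 := Jret p r gamma rho0 pik.
move=> hP h7 h6.
have -> : J1 - J2 = (P * k) / k ^+ 2 by rewrite hP; field.
have -> : k^-1 * X - 2 * gamma * C / k ^+ 2 * (2^-1 * T) = (X * k - gamma * C * T) / k ^+ 2.
  by field.
apply: ler_wpM2r; first by rewrite invr_ge0 exprn_ge0 // ltW.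
lra.
Qed.

End Main.

Theorem lemma3 (R : realType) (S A : finType)
  (p : S -> A -> S -> R) (r : S -> A -> R) (rho0 : S -> R) (gamma : R)
  (pik pi piref : S -> A -> R) :
  is_kernel p -> is_dist rho0 -> 0 <= gamma -> gamma < 1 ->
  is_policy pik -> is_policy pi -> is_policy piref ->
  (* the likelihood ratio pi/piref is well defined *)
  (forall s a, piref s a = 0 -> pi s a = 0) ->
  let C := \big[Num.max/0]_(s : S)
             `| \sum_(a : A) pi s a * Af p r gamma pik s a | in
  Jret p r gamma rho0 pi - Jret p r gamma rho0 pik >=
    (1 - gamma)^-1 *
      (\sum_(s : S) \sum_(a : A) dvis p gamma rho0 piref s * piref s a *
          (pi s a / piref s a * Af p r gamma pik s a))
    - (2 * gamma * C) / (1 - gamma) ^+ 2 *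
      (\sum_(s : S) dvis p gamma rho0 piref s * TV pi piref s).
Proof.
move=> Hp Hrho g0 g1 Hk Hpi Href Hz.
apply: main => //.
  move=> s.
  exact: (le_bigmax0 _ _ (fun s => `|\sum_a pi s a * Af p r gamma pik s a|) s).
exact: bigmax0_ge0.
Qed.
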